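(* Let $G$ be a compact Lie group with normalized Haar measure $dg$, and let $\sigma_1,\sigma_2,\alpha_1,\alpha_2,\rho$ be finite-dimensional unitary representations of $G$. Then the operator on $V_{\sigma_1}\otimes V_{\sigma_2}$ $$\Phi:=\int_{G\times G}\chi_{\alpha_1}(g)\,\chi_{\alpha_2}(h)\,\chi_{\rho}(g h^{-1})\,\sigma_1(g)\otimes\sigma_2(h)\,dg\,dh$$ is positive, i.e. $\langle v,\Phi v\rangle\geq0$ for all $v\in V_{\sigma_1}\otimes V_{\sigma_2}$.
   Context: $\chi_\rho(g)=\mathrm{tr}\,\rho(g)$ denotes the character of a finite-dimensional representation $\rho$. Representation spaces carry $G$-invariant scalar products making the representations unitary, and the tensor product carries the induced scalar product. An operator $A$ is positive if $\langle v,Av\rangle\ge 0$ for all $v$. *)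

(* Defs.v *)
From HB Require Import structures.
From mathcomp Require Import all_boot all_order all_algebra.
From mathcomp Require Import all_classical all_reals all_analysis.
From mathcomp Require Import complex mxtens.

Set Implicit Arguments.
Unset Strict Implicit.
Unset Printing Implicit Defensive.

Import Order.TTheory GRing.Theory Num.Theory.
Import numFieldNormedType.Exports.
Local Open Scope classical_set_scope.
Local Open Scope ring_scope.

Definition borel (G : ptopologicalType) := g_sigma_algebraType (@open G).

Definition is_compact_group (G : ptopologicalType)
    (mul : G -> G -> G) (inv : G -> G) (one : G) : Prop :=
  [/\ (forall x y z, mul x (mul y z) = mul (mul x y) z),
      (forall x, mul one x = x /\ mul x one = x) &
      (forall x, mul (inv x) x = one /\ mul x (inv x) = one)] /\
  [/\ continuous (fun p : G * G => mul p.1 p.2),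
      continuous inv,
      hausdorff_space G &
      compact [set: G] ].

Definition is_normalized_haar (R : realType) (G : ptopologicalType)
    (mul : G -> G -> G) (mu : {measure set (borel G) -> \bar R}) : Prop :=
  [/\ mu [set: borel G] = 1%E,
      (forall (g : G) (A : set (borel G)), measurable A ->
         mu [set mul g x | x in A] = mu A) &
      (forall (g : G) (A : set (borel G)), measurable A ->
         mu [set mul x g | x in A] = mu A) ].

Definition mxadj (R : rcfType) m n (A : 'M[R[i]]_(m, n)) : 'M[R[i]]_(n, m) :=
  (map_mx Num.conj A)^T.

(* A finite-dimensional continuous unitary representation of G on C^n
   (written in an orthonormal basis for the invariant scalar product). *)
Definition is_unitary_rep (R : realType) (G : ptopologicalType)
    (mul : G -> G -> G) (one : G) n (rho : G -> 'M[R[i]]_n) : Prop :=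
  [/\ rho one = 1%:M,
      (forall g h, rho (mul g h) = rho g *m rho h),
      (forall g, rho g *m mxadj (rho g) = 1%:M) &
      (forall i j, continuous (fun g : G => complex.Re (rho g i j)) /\
                   continuous (fun g : G => complex.Im (rho g i j))) ].

Definition character (R : rcfType) (G : Type) n (rho : G -> 'M[R[i]]_n)
  (g : G) : R[i] := \tr (rho g).

Definition cintegral (R : realType) (G : ptopologicalType)
    (mu : {measure set (borel G) -> \bar R}) (f : G -> R[i]) : R[i] :=
  Complex (Rintegral mu [set: borel G] (fun x => complex.Re (f x)))
          (Rintegral mu [set: borel G] (fun x => complex.Im (f x))).

Definition mx_integral (R : realType) (G : ptopologicalType)
    (mu : {measure set (borel G) -> \bar R}) m n (F : G -> 'M[R[i]]_(m, n))
  : 'M[R[i]]_(m, n) :=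
  \matrix_(i, j) cintegral mu (fun x => F x i j).

(* Main.v *)
Require Import Defs.
From HB Require Import structures.
From mathcomp Require Import all_boot all_order all_algebra.
From mathcomp Require Import all_classical all_reals all_analysis.
From mathcomp Require Import complex mxtens ring.
Import Order.TTheory GRing.Theory Num.Theory.
Import numFieldNormedType.Exports.
Local Open Scope classical_set_scope.
Local Open Scope ring_scope.

Section Gram.
Variable (C : numClosedFieldType).
Lemma gram (I1 I2 K : finType) (P1 : I1 -> I1 -> C) (P2 : I2 -> I2 -> C)
  (h1 : forall x y, \sum_k Num.conj (P1 k x) * P1 k y = P1 x y)
  (h2 : forall x y, \sum_k Num.conj (P2 k x) * P2 k y = P2 x y)
  (phi1 : K -> I1) (phi2 : K -> I2) (w : K -> C) :
  0 <= \sum_k \sum_l Num.conj (w k) * w l * P1 (phi1 k) (phi1 l) * P2 (phi2 k) (phi2 l).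
Proof.
pose Z s t := \sum_l w l * P1 s (phi1 l) * P2 t (phi2 l).
have -> : \sum_k \sum_l Num.conj (w k) * w l * P1 (phi1 k) (phi1 l) * P2 (phi2 k) (phi2 l)
   = \sum_s \sum_t Num.conj (Z s t) * Z s t.
  transitivity (\sum_s \sum_t \sum_k \sum_l (Num.conj (w k * P1 s (phi1 k) * P2 t (phi2 k)))
                   * (w l * P1 s (phi1 l) * P2 t (phi2 l))); last first.
    apply: eq_bigr => s _; apply: eq_bigr => t _.
    rewrite /Z rmorph_sum mulr_suml; apply: eq_bigr => k _.
    by rewrite mulr_sumr.
  symmetry.
  under eq_bigr do rewrite exchange_big /=.
  rewrite exchange_big /=; apply: eq_bigr => k _.
  under eq_bigr do rewrite exchange_big /=.
  rewrite exchange_big /=; apply: eq_bigr => l _.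
  symmetry.
  rewrite -(h1 (phi1 k) (phi1 l)) -(h2 (phi2 k) (phi2 l)).
  rewrite mulr_sumr [RHS]exchange_big /=; apply: eq_bigr => t _.
  rewrite mulr_sumr mulr_suml; apply: eq_bigr => s _.
  rewrite !rmorphM /=; ring.
apply: sumr_ge0 => s _; apply: sumr_ge0 => t _.
by rewrite mulrC mul_conjC_ge0.
Qed.
End Gram.

Lemma sum4 (K : comRingType) (I1 I2 I3 I4 : finType) (A : I1 -> K) (B : I2 -> K) (C : I3 -> I4 -> K) D :
  (\sum_a A a) * (\sum_a' B a') * (\sum_b \sum_c C b c) * D = \sum_a \sum_a' \sum_b \sum_c A a * B a' * C b c * D.
Proof.
rewrite -!mulrA mulr_suml; apply: eq_bigr => a _.
rewrite mulr_suml mulr_sumr; apply: eq_bigr => a' _.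
rewrite mulr_suml mulr_sumr mulr_sumr; apply: eq_bigr => b _.
rewrite mulr_suml mulr_sumr mulr_sumr; apply: eq_bigr => c _.
by rewrite !mulrA.
Qed.

Section S.
Variables (R : realType) (G : ptopologicalType) (mu : {measure set (borel G) -> \bar R}).
Hypothesis mu1 : mu [set: borel G] = 1%E.
Hypothesis cpt : compact [set: G].
Variables (mul : G -> G -> G) (inv : G -> G) (one : G).
Hypothesis massoc : forall x y z, mul x (mul y z) = mul (mul x y) z.
Hypothesis mone : forall x, mul one x = x /\ mul x one = x.
Hypothesis minv : forall x, mul (inv x) x = one /\ mul x (inv x) = one.
Hypothesis mcont : continuous (fun p : G * G => mul p.1 p.2).
Hypothesis haarL : forall (g : G) (A : set (borel G)), measurable A ->
         mu [set mul g x | x in A] = mu A.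

Lemma rcont_meas (f : G -> R) : continuous f -> measurable_fun [set: borel G] f.
Proof.
move=> cf; apply: (measurability _ (measurable_realfun.RGenOpens.measurableE R)).
move=> _ [_ [a [b ->] <-]]; apply: sub_sigma_algebra; rewrite setTI.
by apply: (proj1 (continuousP f) cf); exact: interval_open.
Qed.

Lemma rcont_int (f : G -> R) : continuous f -> mu.-integrable [set: borel G] (EFin \o f).
Proof.
move=> cf; apply: measurable_bounded_integrable => //.
- by rewrite mu1 ltry.
- exact: rcont_meas.
have : compact (f @` [set: G]).
  apply: (@continuous_compact G R f) => //. apply: continuous_subspaceT; exact: cf.
move=> cR; have := @compact_bounded R R^o _ cR.
move=> H0.
have H : \forall M \near +oo, globally (range f) [set x : R | `|x| <= M] := H0.
rewrite /bounded_near; near=> M => x _.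
have := near H M; apply => //.

Unshelve. all: by end_near.
Qed.

Lemma ReD (x y : R[i]) : complex.Re (x + y) = complex.Re x + complex.Re y. Proof. by case: x; case: y. Qed.
Lemma ImD (x y : R[i]) : complex.Im (x + y) = complex.Im x + complex.Im y. Proof. by case: x; case: y. Qed.
Lemma ReM (x y : R[i]) : complex.Re (x * y) = complex.Re x * complex.Re y - complex.Im x * complex.Im y. Proof. by case: x; case: y. Qed.
Lemma ImM (x y : R[i]) : complex.Im (x * y) = complex.Re x * complex.Im y + complex.Im x * complex.Re y. Proof. by case: x => a b; case: y => c d /=; rewrite addrC. Qed.
Lemma ReJ (x : R[i]) : complex.Re (Num.conj x) = complex.Re x. Proof. by case: x. Qed.
Lemma ImJ (x : R[i]) : complex.Im (Num.conj x) = - complex.Im x. Proof. by case: x. Qed.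
Lemma Re0 : complex.Re (0 : R[i]) = 0. Proof. by []. Qed.
Lemma Im0 : complex.Im (0 : R[i]) = 0. Proof. by []. Qed.

Definition nice (f : G -> R[i]) :=
  continuous (fun x => complex.Re (f x)) /\ continuous (fun x => complex.Im (f x)).

Lemma nice_cst c : nice (fun _ => c).
Proof. by split; apply: cst_continuous. Qed.

Lemma contD {f g : G -> R} : continuous f -> continuous g -> continuous (fun x => f x + g x).
Proof. move=> cf cg x. have := (@continuousD R R^o G f g x). by apply; [apply: cf|apply: cg]. Qed.
Lemma contB {f g : G -> R} : continuous f -> continuous g -> continuous (fun x => f x - g x).
Proof. move=> cf cg x; have := @continuousB R R^o G f g x; by apply; [apply: cf|apply: cg]. Qed.
Lemma contM {f g : G -> R} : continuous f -> continuous g -> continuous (fun x => f x * g x).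
Proof. move=> cf cg x; have := @continuousM R G f g x; by apply; [apply: cf|apply: cg]. Qed.
Lemma contN {f : G -> R} : continuous f -> continuous (fun x => - f x).
Proof. move=> cf x; have := (@continuousN R R^o G f x); by apply; apply: cf. Qed.
Lemma eq_cont (f g : G -> R) : continuous f -> f =1 g -> continuous g.
Proof. by move=> cf /funext <-. Qed.

Lemma nice_add {f g : G -> R[i]} : nice f -> nice g -> nice (fun x => f x + g x).
Proof.
move=> [f1 f2] [g1 g2]; split.
  by apply: (eq_cont _ _ (contD f1 g1)) => y; rewrite ReD.
by apply: (eq_cont _ _ (contD f2 g2)) => y; rewrite ImD.
Qed.

Lemma nice_mul {f g : G -> R[i]} : nice f -> nice g -> nice (fun x => f x * g x).
Proof.
move=> [f1 f2] [g1 g2]; split.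
  by apply: (eq_cont _ _ (contB (contM f1 g1) (contM f2 g2))) => y; rewrite ReM.
by apply: (eq_cont _ _ (contD (contM f1 g2) (contM f2 g1))) => y; rewrite ImM.
Qed.

Lemma nice_conj {f : G -> R[i]} : nice f -> nice (fun x => Num.conj (f x)).
Proof.
move=> [f1 f2]; split.
  by apply: (eq_cont _ _ f1) => y; rewrite ReJ.
by apply: (eq_cont _ _ (contN f2)) => y; rewrite ImJ.
Qed.

Lemma nice_eq {f g : G -> R[i]} : nice f -> f =1 g -> nice g.
Proof. by move=> nf /funext <-. Qed.

Lemma nice_sum (I : Type) (s : seq I) (P : pred I) (F : I -> G -> R[i]) :
  (forall i, nice (F i)) -> nice (fun x => \sum_(i <- s | P i) F i x).
Proof.
move=> nF; elim: s => [|a s IH].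
  by apply: (nice_eq (nice_cst (0 : R[i]))) => x; rewrite big_nil.
case Pa: (P a).
  by apply: (nice_eq (nice_add (nF a) IH)) => x; rewrite big_cons Pa.
by apply: (nice_eq IH) => x; rewrite big_cons Pa.
Qed.

Definition cint (f : G -> R[i]) := cintegral mu f.

Lemma cint_add f g : nice f -> nice g -> cint (fun x => f x + g x) = cint f + cint g.
Proof.
move=> [f1 f2] [g1 g2]; rewrite /cint /cintegral.
under eq_Rintegral do rewrite ReD.
under [X in Complex _ X]eq_Rintegral do rewrite ImD.
by rewrite !RintegralD //; apply: rcont_int.
Qed.

Lemma cint_cst c : cint (fun _ => c) = c.
Proof.
rewrite /cint /cintegral !Rintegral_cst // mu1 /= !mulr1.
by case: c.
Qed.

Lemma cint_mull c f : nice f -> cint (fun x => c * f x) = c * cint f.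
Proof.
move=> [f1 f2]; rewrite /cint /cintegral.
under eq_Rintegral do rewrite ReM.
under [X in Complex _ X]eq_Rintegral do rewrite ImM.
rewrite !RintegralB ?RintegralD ?RintegralZl //; try apply: rcont_int => //;
  try (by apply: continuousM => //; apply: cst_continuous).
- by case: c => a b /=; congr Complex; rewrite addrC.
all: by apply: (@contM (fun _ => _) (fun x => _)); [exact: cst_continuous|].
Qed.


Lemma cint_mulr c f : nice f -> cint (fun x => f x * c) = cint f * c.
Proof. by move=> nf; rewrite mulrC -cint_mull //; congr cint; apply/funext => x; rewrite mulrC. Qed.

Lemma cint_ext f g : f =1 g -> cint f = cint g.
Proof. by move=> /funext ->. Qed.

Lemma cint_conj f : nice f -> cint (fun x => Num.conj (f x)) = Num.conj (cint f).
Proof.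
move=> [f1 f2]; rewrite /cint /cintegral.
under eq_Rintegral do rewrite ReJ.
under [X in Complex _ X]eq_Rintegral do rewrite ImJ -mulN1r.
by rewrite RintegralZl //= ?mulN1r //; apply: rcont_int.
Qed.

Lemma cint_sum (I : Type) (s : seq I) (P : pred I) (F : I -> G -> R[i]) :
  (forall i, nice (F i)) ->
  cint (fun x => \sum_(i <- s | P i) F i x) = \sum_(i <- s | P i) cint (F i).
Proof.
move=> nF; elim: s => [|a s IH].
  rewrite big_nil; transitivity (cint (fun _ => (0:R[i]))); last exact: cint_cst.
  by apply: cint_ext => x; rewrite big_nil.
rewrite big_cons; case Pa: (P a).
  rewrite -IH -cint_add //; last exact: nice_sum.
  by apply: cint_ext => x; rewrite big_cons Pa.
by rewrite -IH; apply: cint_ext => x; rewrite big_cons Pa.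
Qed.

Lemma lmul_cont y : continuous (mul y).
Proof.
move=> x; apply: (@continuous_comp _ _ _ (fun x => (y, x)) (fun p : G * G => mul p.1 p.2)).
  by apply: cvg_pair => /=; [exact: cvg_cst|exact: cvg_id].
exact: mcont.
Qed.

Lemma lmul_meas y : measurable_fun [set: borel G] (fun x : borel G => (mul y x : borel G)).
Proof.
apply: (@measurability _ _ (borel G) (borel G) _ _ (@open G)) => //.
move=> _ [B oB <-]; apply: sub_sigma_algebra; rewrite setTI.
exact: (proj1 (continuousP _) (lmul_cont y)).
Qed.

Lemma Rint_inv (f : G -> R) y : continuous f ->
  Rintegral mu [set: borel G] (fun x => f (mul y x)) = Rintegral mu [set: borel G] f.
Proof.
move=> cf; rewrite /Rintegral; congr fine.
have H : (\int[pushforward mu (fun x : borel G => (mul y x : borel G))]_(x in [set: borel G]) (f x)%:E =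
          \int[mu]_(x in [set: borel G]) (f (mul y x))%:E)%E.
  rewrite (integral_pushforward (lmul_meas y)) ?preimage_setT //.
  - by apply/measurable_realfun.measurable_EFinP; apply: rcont_meas.
  - apply: (@rcont_int (fun x => f (mul y x))).
    by move=> x; apply: continuous_comp; [exact: lmul_cont|exact: cf].
rewrite -H; apply: (eq_measure_integral mu); first exact: lmul_meas.
move=> mf A mA _.
rewrite /pushforward /=. rewrite /pushforward.
rewrite (_ : _ @^-1` A = [set mul (inv y) x | x in A]); first exact: haarL.
apply/seteqP; split => x /=.
  move=> Ax; exists (mul y x) => //.
  by rewrite massoc (proj1 (minv y)) (proj1 (mone x)).
by move=> [z Az <-]; rewrite massoc (proj2 (minv y)) (proj1 (mone z)).
Qed.

Lemma cint_inv (f : G -> R[i]) y : nice f -> cint (fun x => f (mul y x)) = cint f.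
Proof.
move=> [f1 f2]; rewrite /cint /cintegral.
rewrite (Rint_inv (fun x => complex.Re (f x))) //.
by rewrite (Rint_inv (fun x => complex.Im (f x))).
Qed.

Lemma sum_delta (I : finType) (x : I) (F : I -> R[i]) :
  \sum_z (x == z)%:R * F z = F x.
Proof.
rewrite (bigD1 x) //= eqxx mul1r big1 ?addr0 // => z zx.
by rewrite eq_sym (negbTE zx) mul0r.
Qed.

Section Rep.
Variables (I : finType) (T : G -> I -> I -> R[i]).
Hypothesis Tmul : forall g h x y, T (mul g h) x y = \sum_z T g x z * T h z y.
Hypothesis Tunit : forall g x y, \sum_z Num.conj (T g z x) * T g z y = (x == y)%:R.
Hypothesis Tnice : forall x y, nice (fun g => T g x y).

Definition P x y := cint (fun g => T g x y).

Lemma P_inv g k y : \sum_z T g k z * P z y = P k y.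
Proof.
rewrite /P; under eq_bigr do rewrite -cint_mull //.
rewrite -cint_sum; last by move=> z; apply: nice_mul => //; exact: nice_cst.
rewrite -[RHS](cint_inv _ g) //.
by apply: cint_ext => h; rewrite Tmul.
Qed.

Lemma P_idem x y : \sum_k Num.conj (P k x) * P k y = P x y.
Proof.
have E k : Num.conj (P k x) * P k y = cint (fun g => Num.conj (T g k x) * P k y).
  by rewrite [P k x]/P -cint_conj // -cint_mulr //; exact: nice_conj.
under eq_bigr do rewrite E.
rewrite -cint_sum; last by move=> k; apply: nice_mul; [exact: nice_conj|exact: nice_cst].
rewrite -[RHS]cint_cst; apply: cint_ext => g.
under eq_bigr do rewrite -(P_inv g) mulr_sumr.
rewrite exchange_big /=.
transitivity (\sum_z (\sum_k Num.conj (T g k x) * T g k z) * P z y).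
  by apply: eq_bigr => z _; rewrite mulr_suml; apply: eq_bigr => k _; rewrite mulrA.
under eq_bigr do rewrite Tunit.
exact: sum_delta.
Qed.

End Rep.

Definition isR {I : finType} (T : G -> I -> I -> R[i]) :=
 [/\ forall g h x y, T (mul g h) x y = \sum_z T g x z * T h z y,
     forall g x y, \sum_z Num.conj (T g z x) * T g z y = (x == y)%:R &
     forall x y, nice (fun g => T g x y)].

Lemma isR_mx {n} {rho : G -> 'M[R[i]]_n} : is_unitary_rep mul one rho ->
  isR (fun g (x y : 'I_n) => rho g x y).
Proof.
case=> r1 rM rU rC; split.
- by move=> g h x y; rewrite rM mxE.
- move=> g x y; have := mulmx1C (rU g).
  move/matrixP/(_ x y); rewrite !mxE => <-.
  by apply: eq_bigr => z _; rewrite !mxE.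
- by move=> x y; exact: rC.
Qed.

Lemma isR_conj {I : finType} {T : G -> I -> I -> R[i]} : isR T ->
  isR (fun g x y => Num.conj (T g x y)).
Proof.
case=> tM tU tN; split.
- by move=> g h x y; rewrite tM rmorph_sum; apply: eq_bigr => z _; rewrite rmorphM.
- move=> g x y.
  transitivity (Num.conj (\sum_z Num.conj (T g z x) * T g z y)).
    by rewrite rmorph_sum; apply: eq_bigr => z _; rewrite rmorphM.
  by rewrite tU; case: (x == y); rewrite ?rmorph1 ?rmorph0.
- by move=> x y; apply: nice_conj.
Qed.

Lemma isR_prod {I J : finType} {T : G -> I -> I -> R[i]} {U : G -> J -> J -> R[i]} :
  isR T -> isR U -> isR (fun g (x y : I * J) => T g x.1 y.1 * U g x.2 y.2).
Proof.
case=> tM tU tN [uM uU uN]; split.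
- move=> g h x y; rewrite tM uM mulr_suml.
  under eq_bigr do rewrite mulr_sumr.
  rewrite pair_big; apply: eq_big => // [[z w]] _ /=.
  by rewrite mulrACA.
- move=> g [x1 x2] [y1 y2] /=.
  rewrite xpair_eqE -[RHS]/((x1 == y1) && (x2 == y2))%:R -mulnb natrM -(tU g x1 y1) -(uU g x2 y2).
  symmetry; rewrite mulr_suml.
  transitivity (\sum_i \sum_z (Num.conj (T g i x1) * T g i y1) * (Num.conj (U g z x2) * U g z y2)).
    by apply: eq_bigr => i _; rewrite mulr_sumr.
  rewrite pair_big; apply: eq_big => // [[z w]] _ /=.
  by rewrite rmorphM mulrACA.
- by move=> x y; apply: nice_mul.
Qed.

Lemma rho_inv {n} {rho : G -> 'M[R[i]]_n} : is_unitary_rep mul one rho ->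
  forall h, rho (inv h) = mxadj (rho h).
Proof.
case=> r1 rM rU rC h.
have e : rho h *m rho (inv h) = 1%:M by rewrite -rM (proj2 (minv h)) r1.
have u : mxadj (rho h) *m rho h = 1%:M := mulmx1C (rU h).
by rewrite -[rho (inv h)]mul1mx -u -mulmxA e mulmx1.
Qed.

Definition T1of {a1 r n1 : nat} (alpha1 : G -> 'M[R[i]]_a1) (rho : G -> 'M[R[i]]_r)
  (sigma1 : G -> 'M[R[i]]_n1) :=
  fun g (x y : ('I_a1 * 'I_r) * 'I_n1) => alpha1 g x.1.1 y.1.1 * rho g x.1.2 y.1.2 * sigma1 g x.2 y.2.
Definition T2of {a1 r n1 : nat} (alpha1 : G -> 'M[R[i]]_a1) (rho : G -> 'M[R[i]]_r)
  (sigma1 : G -> 'M[R[i]]_n1) :=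
  fun g (x y : ('I_a1 * 'I_r) * 'I_n1) => alpha1 g x.1.1 y.1.1 * Num.conj (rho g x.1.2 y.1.2) * sigma1 g x.2 y.2.

Lemma PW n1 n2 a1 a2 r (sigma1 : G -> 'M[R[i]]_n1) (sigma2 : G -> 'M[R[i]]_n2)
    (alpha1 : G -> 'M[R[i]]_a1) (alpha2 : G -> 'M[R[i]]_a2) (rho : G -> 'M[R[i]]_r) :
  is_unitary_rep mul one rho -> forall g h p1 q1 p2 q2,
  character alpha1 g * character alpha2 h * character rho (mul g (inv h)) *
    (sigma1 g p1 q1 * sigma2 h p2 q2) =
  \sum_a \sum_a' \sum_b \sum_c T1of alpha1 rho sigma1 g ((a,b),p1) ((a,c),q1) *
                             T2of alpha2 rho sigma2 h ((a',b),p2) ((a',c),q2).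
Proof.
move=> Hr g h p1 q1 p2 q2.
have chr : character rho (mul g (inv h)) = \sum_b \sum_c rho g b c * Num.conj (rho h b c).
  case: (Hr) => _ rM _ _.
  rewrite /character /mxtrace rM; apply: eq_bigr => b _; rewrite mxE.
  by apply: eq_bigr => c _; rewrite (rho_inv Hr) !mxE.
rewrite chr /character /mxtrace sum4.
apply: eq_bigr => a _; apply: eq_bigr => a' _; apply: eq_bigr => b _; apply: eq_bigr => c _.
rewrite /T1of /T2of /=; ring.
Qed.

Section Main.
Variables (n1 n2 a1 a2 r : nat)
    (sigma1 : G -> 'M[R[i]]_n1) (sigma2 : G -> 'M[R[i]]_n2)
    (alpha1 : G -> 'M[R[i]]_a1) (alpha2 : G -> 'M[R[i]]_a2)
    (rho : G -> 'M[R[i]]_r).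
Hypotheses (Hs1 : is_unitary_rep mul one sigma1) (Hs2 : is_unitary_rep mul one sigma2)
  (Ha1 : is_unitary_rep mul one alpha1) (Ha2 : is_unitary_rep mul one alpha2)
  (Hr : is_unitary_rep mul one rho).

Let T1 := T1of alpha1 rho sigma1.
Let T2 := T2of alpha2 rho sigma2.
Let R1 : isR T1 := isR_prod (isR_prod (isR_mx Ha1) (isR_mx Hr)) (isR_mx Hs1).
Let R2 : isR T2 := isR_prod (isR_prod (isR_mx Ha2) (isR_conj (isR_mx Hr))) (isR_mx Hs2).
Let N1 : forall x y, nice (fun g => T1 g x y). Proof. by case: R1. Qed.
Let N2 : forall x y, nice (fun g => T2 g x y). Proof. by case: R2. Qed.

Ltac nice_t := repeat (first [ apply: nice_sum => ? | exact: (nice_mul (nice_cst _) (N2 _ _))]).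
Ltac nice_t2 := repeat (first [ apply: nice_sum => ? | exact: (nice_mul (N1 _ _) (nice_cst _))]).

Lemma Phi_entry p q :
  (mx_integral mu (fun g => mx_integral mu (fun h =>
      (character alpha1 g * character alpha2 h * character rho (mul g (inv h))) *: (sigma1 g *t sigma2 h)))) p q =
  \sum_a \sum_a' \sum_b \sum_c P _ T1 ((a,b),(mxtens_unindex p).1) ((a,c),(mxtens_unindex q).1) *
     P _ T2 ((a',b),(mxtens_unindex p).2) ((a',c),(mxtens_unindex q).2).
Proof.
rewrite /mx_integral mxE.
transitivity (cint (fun g => \sum_a \sum_a' \sum_b \sum_c
   T1 g ((a,b),(mxtens_unindex p).1) ((a,c),(mxtens_unindex q).1) *
     P _ T2 ((a',b),(mxtens_unindex p).2) ((a',c),(mxtens_unindex q).2))).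
  apply: cint_ext => g; rewrite mxE.
  transitivity (cint (fun h => \sum_a \sum_a' \sum_b \sum_c
   T1 g ((a,b),(mxtens_unindex p).1) ((a,c),(mxtens_unindex q).1) *
     T2 h ((a',b),(mxtens_unindex p).2) ((a',c),(mxtens_unindex q).2))).
    by apply: cint_ext => h; rewrite !mxE; apply: PW.
  rewrite cint_sum; last by move=> ?; nice_t.
  apply: eq_bigr => a _; rewrite cint_sum; last by move=> ?; nice_t.
  apply: eq_bigr => a' _; rewrite cint_sum; last by move=> ?; nice_t.
  apply: eq_bigr => b _; rewrite cint_sum; last by move=> ?; nice_t.
  by apply: eq_bigr => c _; rewrite cint_mull //; nice_t.
rewrite cint_sum; last by move=> ?; nice_t2.
apply: eq_bigr => a _; rewrite cint_sum; last by move=> ?; nice_t2.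
apply: eq_bigr => a' _; rewrite cint_sum; last by move=> ?; nice_t2.
apply: eq_bigr => b _; rewrite cint_sum; last by move=> ?; nice_t2.
by apply: eq_bigr => c _; rewrite cint_mulr //; nice_t2.
Qed.

Lemma main_pos :
  let Phi : 'M[R[i]]_(n1 * n2) :=
    mx_integral mu (fun g => mx_integral mu (fun h =>
      (character alpha1 g * character alpha2 h * character rho (mul g (inv h)))
        *: (sigma1 g *t sigma2 h))) in
  forall v : 'cV[R[i]]_(n1 * n2), 0 <= (mxadj v *m Phi *m v) ord0 ord0.
Proof.
move=> Phi v.
have qf_sum (I : finType) (F : I -> 'M[R[i]]_(n1*n2)) :
    (mxadj v *m (\sum_i F i) *m v) ord0 ord0 = \sum_i (mxadj v *m F i *m v) ord0 ord0.
  by rewrite mulmx_sumr mulmx_suml summxE.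
have qfE (M : 'M[R[i]]_(n1*n2)) : (mxadj v *m M *m v) ord0 ord0 =
    \sum_p \sum_q Num.conj (v p ord0) * v q ord0 * M p q.
  rewrite mxE.
  transitivity (\sum_q \sum_p Num.conj (v p ord0) * v q ord0 * M p q); last first.
    exact: exchange_big.
  apply: eq_bigr => q _; rewrite mxE mulr_suml; apply: eq_bigr => p _.
  by rewrite !mxE; ring.
pose N a a' := \matrix_(p, q) \sum_b \sum_c
   P _ T1 ((a,b),(mxtens_unindex p).1) ((a,c),(mxtens_unindex q).1) *
   P _ T2 ((a',b),(mxtens_unindex p).2) ((a',c),(mxtens_unindex q).2).
have PhiE : Phi = \sum_a \sum_a' N a a'.
  apply/matrixP => p q; rewrite /Phi Phi_entry summxE; apply: eq_bigr => a _.
  by rewrite summxE; apply: eq_bigr => a' _; rewrite mxE.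
rewrite PhiE qf_sum; apply: sumr_ge0 => a _; rewrite qf_sum; apply: sumr_ge0 => a' _.
rewrite qfE.
case: R1 => t1M t1U t1N; case: R2 => t2M t2U t2N.
have h1 := @P_idem _ T1 t1M t1U t1N.
have h2 := @P_idem _ T2 t2M t2U t2N.
pose Y p q b c := Num.conj (v p ord0) * v q ord0 *
   (P _ T1 ((a,b),(mxtens_unindex p).1) ((a,c),(mxtens_unindex q).1) *
   P _ T2 ((a',b),(mxtens_unindex p).2) ((a',c),(mxtens_unindex q).2)).
have -> : \sum_p \sum_q Num.conj (v p ord0) * v q ord0 * N a a' p q =
          \sum_b \sum_p \sum_c \sum_q Y p q b c.
  transitivity (\sum_p \sum_q \sum_b \sum_c Y p q b c).
    apply: eq_bigr => p _; apply: eq_bigr => q _; rewrite mxE mulr_sumr.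
    by apply: eq_bigr => b _; rewrite mulr_sumr.
  transitivity (\sum_p \sum_b \sum_q \sum_c Y p q b c).
    by apply: eq_bigr => p _; exact: exchange_big.
  rewrite exchange_big /=; apply: eq_bigr => b _; apply: eq_bigr => p _.
  exact: exchange_big.
rewrite pair_bigA.
under eq_bigr do rewrite pair_bigA.
have := @gram _ _ _ _ _ _ h1 h2
  (fun k : 'I_r * 'I_(n1 * n2) => ((a, k.1), (mxtens_unindex k.2).1))
  (fun k : 'I_r * 'I_(n1 * n2) => ((a', k.1), (mxtens_unindex k.2).2))
  (fun k : 'I_r * 'I_(n1 * n2) => v k.2 ord0).
congr (_ <= _); apply: eq_bigr => k _; apply: eq_bigr => l _.
by rewrite /Y /= mulrA.
Qed.
End Main.
End S.

Theorem lemma1 (R : realType) (G : ptopologicalType)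
    (mul : G -> G -> G) (inv : G -> G) (one : G)
    (mu : {measure set (borel G) -> \bar R})
    (n1 n2 a1 a2 r : nat)
    (sigma1 : G -> 'M[R[i]]_n1) (sigma2 : G -> 'M[R[i]]_n2)
    (alpha1 : G -> 'M[R[i]]_a1) (alpha2 : G -> 'M[R[i]]_a2)
    (rho : G -> 'M[R[i]]_r) :
  is_compact_group mul inv one ->
  is_normalized_haar mul mu ->
  is_unitary_rep mul one sigma1 -> is_unitary_rep mul one sigma2 ->
  is_unitary_rep mul one alpha1 -> is_unitary_rep mul one alpha2 ->
  is_unitary_rep mul one rho ->
  let Phi : 'M[R[i]]_(n1 * n2) :=
    mx_integral mu (fun g => mx_integral mu (fun h =>
      (character alpha1 g * character alpha2 h * character rho (mul g (inv h)))
        *: (sigma1 g *t sigma2 h))) in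
  forall v : 'cV[R[i]]_(n1 * n2), 0 <= (mxadj v *m Phi *m v) ord0 ord0.
Proof.
move=> [[ma mo mi] [mc _ _ cp]] [m1 hL _] Hs1 Hs2 Ha1 Ha2 Hr.
exact: (@main_pos _ _ _ m1 cp _ _ _ ma mo mi mc hL _ _ _ _ _ _ _ _ _ _ Hs1 Hs2 Ha1 Ha2 Hr).
Qed.
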